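(* Let $n$ be a positive integer and $\Theta=\left[-\frac{1}{\sqrt n},+\frac{1}{\sqrt n}\right]^n$. Consider any (possibly randomized) learner that, for $t=1,\dots,T$, outputs $\hat c_t\in\Theta$ depending only on past observations $\{(X_i,x_i)\}_{i=1}^{t-1}$ (and its internal randomness). For any $T\ge n$ and $B>0$, there exist $c^*\in\Theta$ and non-empty compact sets $X_1,\dots,X_T\subseteq\mathbb{R}^n$ such that $$\max_{t=1,\dots,T}\max\{\langle c-c',x-x'\rangle: c,c'\in\Theta,\ x,x'\in X_t\}=B\quad\text{and}\quad\mathbb{E}\left[R^{c^*}_T\right]\ge\frac{Bn}{4},$$ where $R^{c^*}_T=\sum_{t=1}^T\langle c^*,x_t-\hat x_t\rangle$, $x_t\in\arg\max_{x\in X_t}\langle c^*,x\rangle$, $\hat x_t\in\arg\max_{x\in X_t}\langle\hat c_t,x\rangle$, and the expectation is over the learner's randomness. *)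

(* Defs.v *)
From HB Require Import structures.
From mathcomp Require Import all_boot all_order all_algebra.
From mathcomp Require Import all_classical all_reals all_analysis.
Set Implicit Arguments. Unset Strict Implicit. Unset Printing Implicit Defensive.
Import Order.TTheory GRing.Theory Num.Theory.
Import numFieldNormedType.Exports.
Local Open Scope classical_set_scope.
Local Open Scope ring_scope.

Definition dotp (R : realType) (n : nat) (u v : 'rV[R]_n) : R :=
  \sum_(i < n) u ord0 i * v ord0 i.

Definition Theta (R : realType) (n : nat) : set 'rV[R]_n :=
  [set c | forall i : 'I_n, - (Num.sqrt (n%:R))^-1 <= c ord0 i <= (Num.sqrt (n%:R))^-1].

Definition is_argmax (R : realType) (n : nat) (X : set 'rV[R]_n) (c x : 'rV[R]_n) : Prop :=
  X x /\ forall y, X y -> dotp c y <= dotp c x.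

Definition history (R : realType) (n : nat) (X : nat -> set 'rV[R]_n)
  (xs : nat -> 'rV[R]_n) (t : nat) : seq (set 'rV[R]_n * 'rV[R]_n) :=
  [seq (X i, xs i) | i <- iota 1 t.-1].

(* realized regret for learner randomness w *)
Definition regret (R : realType) (n : nat) (Omega : Type)
  (act : Omega -> nat -> seq (set 'rV[R]_n * 'rV[R]_n) -> set 'rV[R]_n -> 'rV[R]_n)
  (T : nat) (cstar : 'rV[R]_n) (X : nat -> set 'rV[R]_n) (xs : nat -> 'rV[R]_n)
  (w : Omega) : R :=
  \sum_(1 <= t < T.+1) dotp cstar (xs t - act w t (history X xs t) (X t)).
Arguments Theta {R} n _.

(* Main.v *)
Require Import Defs.
From HB Require Import structures.
From mathcomp Require Import all_boot all_order all_algebra.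
From mathcomp Require Import all_classical all_reals all_analysis.
From mathcomp Require Import ring lra zify.
From mathcomp Require Import measurable_realfun.
Import Order.TTheory GRing.Theory Num.Theory.
Import numFieldNormedType.Exports.
Local Open Scope classical_set_scope.
Local Open Scope ring_scope.

Definition Ev (R : realType) (n : nat) (a : R) (j : nat) : 'rV[R]_n :=
  \row_(k < n) (if (k : nat) == j then a else 0).

Arguments Ev {R} n a j.

Definition Xs (R : realType) (n : nat) (a : R) (t : nat) : set 'rV[R]_n :=
  [set x | x = 0 \/ x = Ev n a t.-1].

Arguments Xs {R} n a t.

Definition yv (R : realType) (n : nat) (a : R) (f : nat -> bool) (i : nat) : 'rV[R]_n :=
  if f i.-1 then Ev n a i.-1 else 0.

Arguments yv {R} n a f i.

Definition hist (R : realType) (n : nat) (a : R) (f : nat -> bool) (t : nat) :=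
  [seq (Xs n a i, yv n a f i) | i <- iota 1 t.-1].

Arguments hist {R} n a f t.

Lemma dotpB (R : realType) (n : nat) (u v w : 'rV[R]_n) :
  dotp u (v - w) = dotp u v - dotp u w.
Proof. rewrite /dotp -sumrB; apply: eq_bigr => i _; rewrite !mxE; ring. Qed.

Lemma dotpBl (R : realType) (n : nat) (u v w : 'rV[R]_n) :
  dotp (u - v) w = dotp u w - dotp v w.
Proof. rewrite /dotp -sumrB; apply: eq_bigr => i _; rewrite !mxE; ring. Qed.

Lemma dotp0 (R : realType) (n : nat) (u : 'rV[R]_n) : dotp u 0 = 0.
Proof. rewrite /dotp big1 // => i _; by rewrite mxE mulr0. Qed.

Lemma Ev_big (R : realType) (n : nat) (a : R) j : (n <= j)%N -> Ev n a j = 0.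
Proof.
move=> hj; apply/rowP => k; rewrite !mxE.
case: eqP => // e; have := ltn_ord k; rewrite e; lia.
Qed.

Lemma dotp_Ev (R : realType) (n : nat) (a : R) (u : 'rV[R]_n) j (hj : (j < n)%N) :
  dotp u (Ev n a j) = u ord0 (Ordinal hj) * a.
Proof.
rewrite /dotp (bigD1 (Ordinal hj)) //= big1 ?addr0; first by rewrite mxE eqxx.
move=> i hi; rewrite mxE; case: eqP; last by rewrite mulr0.
move=> e; exfalso; move/eqP: hi; apply; apply/val_inj => /=; exact e.
Qed.

Lemma Xs_compact (R : realType) (n : nat) (a : R) t : compact (Xs n a t).
Proof.
have -> : Xs n a t = [set 0] `|` [set Ev n a t.-1].
  by apply/seteqP; split => x /=.
apply: compactU; exact: compact_set1.
Qed.

Definition Gf (R : realType) (n : nat) (Omega : Type)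
  (act : Omega -> nat -> seq (set 'rV[R]_n * 'rV[R]_n) -> set 'rV[R]_n -> 'rV[R]_n)
  (a : R) (t : nat) (f : nat -> bool) (w : Omega) : R :=
  dotp (Ev n a t.-1) (act w t (hist n a f t) (Xs n a t)).

Arguments Gf {R n Omega} act a t f w.

Definition chooseb (R : realType) (n : nat) d (Omega : measurableType d)
  (P : probability Omega R)
  (act : Omega -> nat -> seq (set 'rV[R]_n * 'rV[R]_n) -> set 'rV[R]_n -> 'rV[R]_n)
  (a s : R) (t : nat) (f : nat -> bool) : bool :=
  (\int[P]_w (s / a * Gf act a t f w)%:E <= \int[P]_w (s / a * (a ^+ 2 - Gf act a t f w))%:E)%E.

Arguments chooseb {R n d Omega} P act a s t f.

Fixpoint sigs (R : realType) (n : nat) d (Omega : measurableType d)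
  (P : probability Omega R)
  (act : Omega -> nat -> seq (set 'rV[R]_n * 'rV[R]_n) -> set 'rV[R]_n -> 'rV[R]_n)
  (a s : R) (k : nat) : seq bool :=
  match k with
  | 0 => [::]
  | k'.+1 => rcons (sigs R n d Omega P act a s k') (chooseb P act a s k'.+1 (nth false (sigs R n d Omega P act a s k')))
  end.

Arguments sigs {R n d Omega} P act a s k.

Definition sigma (R : realType) (n : nat) d (Omega : measurableType d)
  (P : probability Omega R)
  (act : Omega -> nat -> seq (set 'rV[R]_n * 'rV[R]_n) -> set 'rV[R]_n -> 'rV[R]_n)
  (a s : R) (i : nat) : bool := nth false (sigs P act a s i.+1) i.

Arguments sigma {R n d Omega} P act a s i.

Lemma size_sigs (R : realType) (n : nat) d (Omega : measurableType d)
  (P : probability Omega R) act (a s : R) k : size (@sigs R n d Omega P act a s k) = k.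
Proof. by elim: k => //= k IH; rewrite size_rcons IH. Qed.

Lemma nth_sigs (R : realType) (n : nat) d (Omega : measurableType d)
  (P : probability Omega R) act (a s : R) k i : (i < k)%N ->
  nth false (@sigs R n d Omega P act a s k) i = sigma P act a s i.
Proof.
elim: k => // k IH; rewrite ltnS leq_eqVlt => /orP [/eqP -> //|hik].
by rewrite /= nth_rcons size_sigs hik IH.
Qed.

Lemma hist_ext (R : realType) (n : nat) (a : R) f g t :
  (forall i, (i < t.-1)%N -> f i = g i) -> hist n a f t = hist n a g t.
Proof.
move=> H; rewrite /hist; apply/eq_in_map => i; rewrite mem_iota => /andP [h1 h2].
by rewrite /yv H //; lia.
Qed.

Lemma sigmaE (R : realType) (n : nat) d (Omega : measurableType d)
  (P : probability Omega R) act (a s : R) i :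
  @sigma R n d Omega P act a s i = chooseb P act a s i.+1 (sigma P act a s).
Proof.
rewrite {1}/sigma /= nth_rcons size_sigs ltnn eqxx.
rewrite /chooseb /Gf (@hist_ext R n a (nth false (sigs P act a s i)) (sigma P act a s)) //.
by move=> j hj; apply: nth_sigs.
Qed.

Lemma half_le (R : realType) (x y : \bar R) (c : R) :
  (x + y = c%:E -> y <= x -> (c / 2)%:E <= x)%E.
Proof.
case: x => [x| |]; case: y => [y| |] //=.
- move=> [<-]; rewrite !lee_fin => h; lra.
all: by move=> *; rewrite ?leey.
Qed.

Lemma dotp_Xs (R : realType) (n : nat) (a : R) (ha : a != 0) (u : 'rV[R]_n) t x
  (hj : (t.-1 < n)%N) : Xs n a t x ->
  dotp u x = u ord0 (Ordinal hj) / a * dotp (Ev n a t.-1) x.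
Proof.
case=> ->; first by rewrite !dotp0 mulr0.
rewrite !dotp_Ev /Ev mxE eqxx; field; exact: ha.
Qed.

Theorem theorem3 (R : realType) (n : nat) (hn : (0 < n)%N)
  (d : measure_display) (Omega : measurableType d) (P : probability Omega R)
  (L : Omega -> nat -> seq (set 'rV[R]_n * 'rV[R]_n) -> 'rV[R]_n)
  (act : Omega -> nat -> seq (set 'rV[R]_n * 'rV[R]_n) -> set 'rV[R]_n -> 'rV[R]_n)
  (hL : forall w t h, Theta n (L w t h))
  (hact : forall w t h (Y : set 'rV[R]_n), compact Y -> Y !=set0 ->
            is_argmax Y (L w t h) (act w t h Y))
  (hmeas : forall t h (Y : set 'rV[R]_n) (c : 'rV[R]_n),
            measurable_fun setT (fun w => dotp c (act w t h Y)))
  (T : nat) (hT : (n <= T)%N) (B : R) (hB : 0 < B) :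
  exists cstar : 'rV[R]_n, Theta n cstar /\
  exists X : nat -> set 'rV[R]_n,
    (forall t, (1 <= t <= T)%N -> compact (X t) /\ X t !=set0) /\
    ((forall t, (1 <= t <= T)%N -> forall c c' x x',
        Theta n c -> Theta n c' -> X t x -> X t x' -> dotp (c - c') (x - x') <= B) /\
     (exists t, (1 <= t <= T)%N /\ exists c c' x x',
        Theta n c /\ Theta n c' /\ X t x /\ X t x' /\ dotp (c - c') (x - x') = B)) /\
    forall xs : nat -> 'rV[R]_n,
      (forall t, (1 <= t <= T)%N -> is_argmax (X t) cstar (xs t)) ->
      ((B * n%:R / 4)%:E <= \int[P]_w (regret act T cstar X xs w)%:E)%E.
Proof.
set s : R := (Num.sqrt (n%:R))^-1.
have s0 : 0 < s by rewrite /s invr_gt0 sqrtr_gt0 ltr0n.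
set a : R := B / (2 * s).
have a0 : 0 < a by rewrite /a divr_gt0 // mulr_gt0.
have an0 : a != 0 by rewrite gt_eqF.
have sa : s * a = B / 2 by rewrite /a; field; rewrite gt_eqF.
set sg := sigma P act a s.
set cs : 'rV[R]_n := \row_(j < n) (if sg j then s else -s).
have csE : forall j (hj : (j < n)%N), cs ord0 (Ordinal hj) = if sg j then s else -s.
  by move=> j hj; rewrite mxE.
have Thcs : Theta n cs.
  by move=> i; rewrite mxE -/s; case: (sg i); apply/andP; split; lra.
exists cs; split => //.
exists (Xs n a).
have Xne : forall t, Xs n a t !=set0 by move=> t; exists 0; left.
split; first by move=> t _; split; [exact: Xs_compact | exact: Xne].
split.
  split.
    move=> t _ c c' x x' hc hc' hx hx'; rewrite dotpB.
    have [hj|hj] := ltnP t.-1 n; last first.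
      move: hx hx'; rewrite /Xs /= Ev_big // => -[] -> [] ->; rewrite !dotp0; lra.
    have := hc (Ordinal hj); have := hc' (Ordinal hj); rewrite -/s.
    move=> /andP [h1 h2] /andP [h3 h4].
    move: hx hx' => [] -> [] ->; rewrite ?dotp0 ?dotp_Ev ?mxE; nra.
  exists 1%N; split; first by apply/andP; split => //; lia.
  exists (\row_(k < n) s), (\row_(k < n) (-s)), (Ev n a 0), 0.
  split; first by move=> i; rewrite mxE -/s; apply/andP; split; lra.
  split; first by move=> i; rewrite mxE -/s; apply/andP; split; lra.
  split; first by right.
  split; first by left.
  rewrite subr0 (@dotp_Ev _ _ _ _ 0 hn) !mxE.
  have -> : (s - - s) * a = 2 * (s * a) by ring.
  by rewrite sa; field.
move=> xs hxs.
have xsE : forall i, (1 <= i <= T)%N -> xs i = yv n a sg i.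
  move=> i hi; have [hX hmax] := hxs i hi.
  rewrite /yv.
  have [hj|hj] := ltnP i.-1 n; last first.
    by rewrite Ev_big //; case: hX => [->|->]; rewrite ?Ev_big //; case: ifP.
  have hE : dotp cs (Ev n a i.-1) = (if sg i.-1 then s else -s) * a.
    by rewrite (@dotp_Ev _ _ _ _ _ hj) csE.
  case: hX => hx; case: ifP => hs; rewrite hx //.
  - exfalso; have := hmax _ (or_intror erefl); rewrite hx dotp0 hE hs sa; lra.
  - exfalso; have := hmax _ (or_introl erefl); rewrite hx dotp0 hE hs mulNr sa; lra.
have histE : forall t, (t <= T.+1)%N -> history (Xs n a) xs t = hist n a sg t.
  move=> t ht; rewrite /history /hist; apply/eq_in_map => i.
  rewrite mem_iota => /andP [h1 h2]; rewrite xsE //; apply/andP; split; lia.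
pose term t w := dotp cs (xs t - act w t (history (Xs n a) xs t) (Xs n a t)).
have tnn : forall t w, (1 <= t <= T)%N -> 0 <= term t w.
  move=> t w ht; rewrite /term dotpB subr_ge0; apply: (hxs t ht).2.
  exact: (hact w t (history (Xs n a) xs t) (Xs n a t) (@Xs_compact R n a t) (Xne t)).1.
have tmeas : forall t, measurable_fun setT (term t).
  move=> t; have -> : term t = (fun w => dotp cs (xs t)) \- (fun w => dotp cs (act w t (history (Xs n a) xs t) (Xs n a t))).
    by apply/funext => w; rewrite /term dotpB.
  by apply: measurable_realfun.measurable_funB; [exact: measurable_cst | exact: hmeas].
have round : forall t, (1 <= t < n.+1)%N -> ((B / 4)%:E <= \int[P]_w (term t w)%:E)%E.
  move=> t /andP [t1 tn].
  have hj : (t.-1 < n)%N by lia.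
  have htT : (t <= T.+1)%N by lia.
  have htT' : (1 <= t <= T)%N by apply/andP; split; lia.
  pose A w := act w t (hist n a sg t) (Xs n a t).
  have Ain : forall w, Xs n a t (A w).
    by move=> w; exact: (hact w t (hist n a sg t) (Xs n a t) (@Xs_compact R n a t) (Xne t)).1.
  pose G w := Gf act a t sg w.
  have GdE : forall w, dotp (Ev n a t.-1) (A w) = G w by [].
  have GE : forall w, G w = 0 \/ G w = a ^+ 2.
    move=> w; rewrite -GdE; case: (Ain w) => ->; first by left; exact: dotp0.
    by right; rewrite (@dotp_Ev _ _ _ _ _ hj) /Ev mxE /= eqxx expr2.
  have termE : forall w, term t w = if sg t.-1 then s / a * (a ^+ 2 - G w) else s / a * G w.
    move=> w; rewrite /term histE // xsE // dotpB.
    rewrite (@dotp_Xs _ _ _ an0 cs t (A w) hj (Ain w)) GdE csE /yv.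
    by case hs: (sg t.-1); rewrite ?dotp0 ?(@dotp_Ev _ _ _ _ _ hj) ?csE ?hs; field; rewrite an0.
  pose H1 w := s / a * (a ^+ 2 - G w).
  pose H2 w := s / a * G w.
  have sa0 : 0 <= s / a by rewrite divr_ge0 // ltW.
  have H1nn : forall w, 0 <= H1 w.
    move=> w; rewrite /H1 mulr_ge0 //; case: (GE w) => ->; rewrite ?subr0 ?subrr ?sqr_ge0 //.
  have H2nn : forall w, 0 <= H2 w.
    move=> w; rewrite /H2 mulr_ge0 //; case: (GE w) => ->; rewrite ?sqr_ge0 //.
  have hGm : measurable_fun setT G := hmeas t (hist n a sg t) (Xs n a t) (Ev n a t.-1).
  have mH1 : measurable_fun setT (fun w : Omega => ((H1 w)%:E : \bar R)).
    apply/measurable_EFinP; exact: measurable_realfun.measurable_funM (measurable_cst _) (measurable_realfun.measurable_funB (measurable_cst _) hGm).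
  have mH2 : measurable_fun setT (fun w : Omega => ((H2 w)%:E : \bar R)).
    apply/measurable_EFinP; exact: measurable_realfun.measurable_funM (measurable_cst _) hGm.
  have sumI : (\int[P]_w (H2 w)%:E + \int[P]_w (H1 w)%:E = (s * a)%:E)%E.
    rewrite -ge0_integralD //; last 2 first.
    - by move=> w _; rewrite lee_fin.
    - by move=> w _; rewrite lee_fin.
    rewrite (eq_integral (fun w => (s * a)%:E)); last first.
      by move=> w _; rewrite -EFinD /H1 /H2; congr (_%:E); field.
    rewrite integral_cst //; rewrite -[RHS]mule1; congr (_ * _)%E; exact: probability_setT.
  have hs := @sigmaE R n d Omega P act a s t.-1.
  rewrite prednK in hs; last by lia.
  rewrite (eq_integral (fun w => (if sg t.-1 then H1 w else H2 w)%:E)); last first.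
    by move=> w _; rewrite termE.
  have -> : B / 4 = (s * a) / 2 by rewrite sa; field.
  case hsg : (sg t.-1).
  - apply: (@half_le R _ (\int[P]_w (H2 w)%:E) _); first by rewrite addeC.
    by move: hs; rewrite -/sg hsg /chooseb => /esym.
  - apply: (@half_le R _ (\int[P]_w (H1 w)%:E) _); first exact: sumI.
    by move: hs; rewrite -/sg hsg /chooseb => /esym/negbT; rewrite -ltNge => /ltW.
pose F t w := ((if (1 <= t < T.+1)%N then term t w else 0)%:E : \bar R).
have -> : (\int[P]_w (regret act T cs (Xs n a) xs w)%:E =
          \int[P]_w (\sum_(t <- index_iota 1 T.+1) F t w))%E.
  apply: eq_integral => w _; rewrite /regret /F sumEFin; congr (_%:E).
  by apply: eq_big_nat => t ht; rewrite ht.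
have mF : forall t, measurable_fun setT (F t).
  move=> t; rewrite /F /=; case: (1 <= t < T.+1)%N; last exact: measurable_cst.
  by apply/measurable_EFinP; exact: tmeas.
have F0 : forall t w, setT w -> (0 <= F t w)%E.
  move=> t w _; rewrite /F /=; case: ifP => ht; rewrite lee_fin //.
  by apply: tnn; move/andP: ht => [h1 h2]; apply/andP; split; lia.
rewrite (ge0_integral_sum P measurableT mF F0).
rewrite (@big_cat_nat _ _ _ n.+1) //=.
apply: (le_trans _ (leeDl _ _)); last first.
  apply: sume_ge0 => t _; apply: integral_ge0 => w _; rewrite /F.
  case: ifP => ht; rewrite lee_fin //.
  by apply: tnn; move/andP: ht => [h1 h2]; apply/andP; split; lia.
apply: (@le_trans _ _ (\sum_(1 <= t < n.+1) (B / 4)%:E)%E).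
  rewrite sumEFin sumr_const_nat lee_fin subn1 /= -mulr_natr.
  have -> : B * (1 * n%:R) / 4 = B / 4 * n%:R by ring.
  by rewrite mulr_natr.
rewrite [X in (X <= _)%E]big_nat_cond [X in (_ <= X)%E]big_nat_cond.
apply: lee_sum => t /andP [ht _].
have ht' : (1 <= t < T.+1)%N by move/andP: ht => [h1 h2]; apply/andP; split; lia.
rewrite (eq_integral (fun w => (term t w)%:E)); first exact: round.
by move=> w _; rewrite /F ht'.
Qed.
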